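(* Let $q$ be a prime power, $s\geq1$, $n=q^{s-1}$, and let $\mathcal{RM}_q(1,s-1)$ be the first order $q$-ary Reed-Muller code. Then for every $0<r<s$, \[ W^{(r)}_{\mathcal{RM}_q(1,s-1)}(X,Y)=\begin{bmatrix} s-1\\ r-1\end{bmatrix}_q Y^n+q^r\begin{bmatrix} s-1\\ r\end{bmatrix}_q X^{q^{s-1-r}}\,Y^{q^{s-1}-q^{s-1-r}}, \] and moreover $W^{(0)}_{\mathcal{RM}_q(1,s-1)}(X,Y)=X^n$ and $W^{(s)}_{\mathcal{RM}_q(1,s-1)}(X,Y)=Y^n$.
   Context: The first order $q$-ary Reed-Muller code $\mathcal{RM}_q(1,s-1)$ is the linear $[q^{s-1},s]$ code over $\mathbb{F}_q$ generated by the $s\times q^{s-1}$ matrix whose first row is the all-one row and whose columns, restricted to the remaining $s-1$ rows, run through all vectors of $\mathbb{F}_q^{s-1}$ (each exactly once). For a linear code $C\subseteq\mathbb{F}_q^n$ and a subcode $D$, the support of $D$ is the set of coordinates where some word of $D$ is nonzero, and $\mathrm{wt}(D)$ is its size. The $r$-th generalized weight enumerator is $W^{(r)}_C(X,Y)=\sum_{w=0}^n A^{(r)}_wX^{n-w}Y^w$ where $A^{(r)}_w$ is the number of $r$-dimensional subspaces $D\subseteq C$ with $\mathrm{wt}(D)=w$. $\begin{bmatrix} a\\ b\end{bmatrix}_q$ denotes the Gaussian binomial coefficient. *)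

(* Defs.v *)
From HB Require Import structures.
From mathcomp Require Import all_boot all_order all_algebra all_field.
Set Implicit Arguments. Unset Strict Implicit. Unset Printing Implicit Defensive.
Import GRing.Theory.
Local Open Scope ring_scope.

(* Gaussian binomial coefficient [a choose b]_q, as the usual ratio
   prod_{i<b} (q^(a-i) - 1) / prod_{i<b} (q^(i+1) - 1)  (exact division;
   it is 0 when b > a). *)
Definition qbinom (q a b : nat) : nat :=
  ((\prod_(i < b) (q ^ (a - i) - 1)) %/ (\prod_(i < b) (q ^ i.+1 - 1)))%N.

Section Codes.
Variable F : finFieldType.

Definition supp_code (k n : nat) (D : 'M[F]_(k, n)) : {set 'I_n} :=
  [set j | [exists v : 'rV[F]_n, (v <= D)%MS && (v 0 j != 0)]].

Definition wt_code (k n : nat) (D : 'M[F]_(k, n)) : nat := #|supp_code D|.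

(* Subspaces of F^n are represented
   canonically by square matrices D with <<D>> = D. *)
Definition gen_wt_count (k n : nat) (C : 'M[F]_(k, n)) (r w : nat) : nat :=
  #|[set D : 'M[F]_n | [&& (<<D>>%MS == D), \rank D == r,
                          (D <= C)%MS & wt_code D == w]]|.

(* r-th generalized weight enumerator as a bivariate polynomial in
   {poly {poly int}}: the inner variable ('X)%:P plays X, outer 'X plays Y. *)
Definition gen_wt_enum (k n : nat) (C : 'M[F]_(k, n)) (r : nat)
  : {poly {poly int}} :=
  \sum_(w < n.+1) ((gen_wt_count C r w)%:R * 'X^(n - w))%:P * 'X^w.

(* First order q-ary Reed-Muller code RM_q(1, m): generator matrix with
   first row all ones, and columns (below the first row) running through all
   vectors of F^m exactly once (indexed by the finite type 'rV[F]_m). *)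
Definition RMgen (m : nat) : 'M[F]_(1 + m, #|{: 'rV[F]_m}|) :=
  col_mx (const_mx 1) (\matrix_(i < m, j < #|{: 'rV[F]_m}|) (enum_val j) 0 i).

End Codes.

(* Main.v *)
Require Import Defs.
From HB Require Import structures.
From mathcomp Require Import all_boot all_order all_algebra all_field.
From mathcomp Require Import zify.
Set Implicit Arguments. Unset Strict Implicit. Unset Printing Implicit Defensive.
Import GRing.Theory.
Local Open Scope ring_scope.

Section Count.
Variable F : finFieldType.
Local Notation q := #|F|.

Lemma q_gt1 : (1 < q)%N.
Proof.
have := subset_leq_card (subsetT [set (0:F); 1]).
by rewrite cards2 eq_sym oner_neq0 cardsT.
Qed.

Lemma card_sub k p (A : 'M[F]_(p, k)) :
  #|[set x : 'rV[F]_k | (x <= A)%MS]| = (q ^ \rank A)%N.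
Proof.
have -> : [set x : 'rV[F]_k | (x <= A)%MS] =
          [set u *m row_base A | u in [set: 'rV[F]_(\rank A)]].
  apply/setP => x; rewrite inE; apply/idP/imsetP.
    rewrite -(eq_row_base A) => /submxP [u ->]; by exists u; rewrite ?inE.
  by move=> [u _ ->]; rewrite -(eq_row_base A) submxMl.
rewrite card_imset; last exact: row_free_inj (row_base_free A).
by rewrite cardsT card_mx mul1n.
Qed.

Lemma card_set_sum (T : finType) (P : pred T) :
  #|[set x | P x]| = (\sum_x (P x : nat))%N.
Proof.
rewrite -sum1_card big_mkcond /=; apply: eq_bigr => x _; rewrite inE.
by case: (P x).
Qed.

Lemma rank_col_mx_row n a (x : 'rV[F]_n) (M : 'M[F]_(a, n)) :
  \rank (col_mx x M) = if (x <= M)%MS then \rank M else (\rank M).+1.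
Proof.
have -> : \rank (col_mx x M) = \rank (x + M)%MS by rewrite addsmxE.
have h1 := mxrank_adds_leqif x M.
have h2 := mxrank_leqif_sup (addsmxSr x M).
have h3 : (\rank x <= 1)%N by apply: rank_leq_row.
have e : ((x + M)%MS <= M)%MS = (x <= M)%MS by rewrite addsmx_sub submx_refl andbT.
case: h1 => h1 _; case: h2 => h2 h2e; rewrite e in h2e.
case: ifP => hx.
  by apply/eqP; rewrite eq_sym h2e.
have : (\rank M != \rank (x + M)%MS) by rewrite h2e hx.
rewrite neq_ltn => /orP [h4|h4]; last by move: h2; rewrite leqNgt h4.
apply/eqP; rewrite eqn_leq h4 andbT.
apply: leq_trans h1 _; rewrite addnC -[X in (_ <= X)%N]addn1 leq_add2l //.
Qed.

Lemma rank_col_mx_swap w k n (W : 'M[F]_(w, n)) (x : 'rV[F]_n) (B : 'M[F]_(k, n)) :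
  \rank (col_mx W (col_mx x B)) = \rank (col_mx x (col_mx W B)).
Proof.
have E1 : (col_mx W (col_mx x B) :=: W + (x + B))%MS :=
  eqmx_trans (eqmx_sym (addsmxE _ _)) (adds_eqmx (eqmx_refl W) (eqmx_sym (addsmxE x B))).
have E2 : (col_mx x (col_mx W B) :=: x + (W + B))%MS :=
  eqmx_trans (eqmx_sym (addsmxE _ _)) (adds_eqmx (eqmx_refl x) (eqmx_sym (addsmxE W B))).
by rewrite E1 E2 !addsmxA (addsmxC W x).
Qed.

Lemma row_free_step w k n (W : 'M[F]_(w, n)) (x : 'rV[F]_n) (B : 'M[F]_(k, n)) :
  row_free (col_mx W (col_mx x B)) =
  row_free (col_mx W B) && ~~ (x <= col_mx W B)%MS.
Proof.
rewrite /row_free rank_col_mx_swap rank_col_mx_row.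
have := rank_leq_row (col_mx W B).
case: ifP => hx /= h.
  by rewrite andbF; apply/eqP => E; move: h; rewrite E; lia.
by rewrite andbT addnS eqSS.
Qed.

Lemma ext_card w n (W : 'M[F]_(w, n)) p (V : 'M[F]_(p, n)) k :
  row_free W -> (W <= V)%MS ->
  #|[set B : 'M[F]_(k, n) | row_free (col_mx W B) && (B <= V)%MS]| =
  (\prod_(i < k) (q ^ \rank V - q ^ (w + i)))%N.
Proof.
move=> fW sWV; elim: k => [|k IH].
  rewrite big_ord0.
  have -> : [set B : 'M[F]_(0, n) | row_free (col_mx W B) && (B <= V)%MS] = setT.
    apply/setP => B; rewrite !inE (flatmx0 B) sub0mx andbT /row_free.
    have -> : \rank (col_mx W (0 : 'M[F]_(0, n))) = \rank W.
      exact: rank_col_mx0.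
    move: fW; rewrite /row_free => /eqP ->; apply/eqP; lia.
  by rewrite cardsT card_mx mul0n expn0.
rewrite card_set_sum big_ord_recr /= -IH.
pose h := fun pr : 'M[F]_(k, n) * 'rV[F]_n => (col_mx pr.2 pr.1 : 'M[F]_(1 + k, n)).
have hb : bijective h.
  exists (fun B : 'M[F]_(1 + k, n) => (dsubmx B, usubmx B)).
    by case=> a b; rewrite /h /= col_mxKu col_mxKd.
  by move=> B; rewrite /h /= vsubmxK.
rewrite (reindex h) /=; last by apply: onW_bij.
rewrite -(pair_big xpredT xpredT (fun B' x =>
   (row_free (col_mx W (col_mx x B')) && (col_mx x B' <= V)%MS : nat))) /=.
rewrite card_set_sum big_distrl /=.
apply: eq_bigr => B' _.
set M := col_mx W B'.
under eq_bigr => x _ do rewrite row_free_step col_mx_sub -/M.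
rewrite -card_set_sum.
case cB : (row_free M && (B' <= V)%MS); last first.
  rewrite mul0n; apply/eqP; rewrite cards_eq0; apply/eqP/setP => x.
  rewrite !inE; apply/negbTE; move: cB; rewrite /M.
  by case: (row_free _); case: (B' <= V)%MS; case: (x <= V)%MS; rewrite ?andbF.
move/andP: cB => [fM sBV].
have sMV : (M <= V)%MS by rewrite col_mx_sub sWV sBV.
have -> : [set x : 'rV[F]_n | (row_free M && ~~ (x <= M)%MS) && ((x <= V)%MS && (B' <= V)%MS)]
   = [set x | (x <= V)%MS] :\: [set x | (x <= M)%MS].
  apply/setP => x; rewrite !inE fM sBV andbT /= andbC.
  by case: (x <= V)%MS.
rewrite cardsD.
have -> : [set x : 'rV[F]_n | (x <= V)%MS] :&: [set x | (x <= M)%MS] = [set x | (x <= M)%MS].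
  apply/setP => x; rewrite !inE; apply/andb_idl => hx; exact: submx_trans hx sMV.
rewrite !card_sub mul1n; move: fM; rewrite /row_free => /eqP ->.
by [].
Qed.

Lemma card_set_sum1 (T : finType) (P : pred T) :
  #|[set x | P x]| = (\sum_(x | P x) 1)%N.
Proof. by rewrite -sum1_card; apply: eq_bigl => x; rewrite inE. Qed.

Lemma sub_col_mxl a b n (A : 'M[F]_(a, n)) (B : 'M[F]_(b, n)) : (A <= col_mx A B)%MS.
Proof. by have := submx_refl (col_mx A B); rewrite col_mx_sub => /andP []. Qed.

Lemma sub_col_mxr a b n (A : 'M[F]_(a, n)) (B : 'M[F]_(b, n)) : (B <= col_mx A B)%MS.
Proof. by have := submx_refl (col_mx A B); rewrite col_mx_sub => /andP []. Qed.

Lemma sub_card w n (W : 'M[F]_(w, n)) p (V : 'M[F]_(p, n)) k :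
  row_free W -> (W <= V)%MS ->
  (#|[set D : 'M[F]_n | [&& <<D>>%MS == D, \rank D == (w + k)%N,
                            (W <= D)%MS & (D <= V)%MS]]| *
   \prod_(i < k) (q ^ (w + k) - q ^ (w + i)))%N
  = (\prod_(i < k) (q ^ \rank V - q ^ (w + i)))%N.
Proof.
move=> fW sWV.
rewrite -(ext_card k fW sWV) [in RHS]card_set_sum1.
rewrite [in RHS](partition_big (fun B : 'M[F]_(k, n) => <<col_mx W B>>%MS)
   (fun D : 'M[F]_n => [&& <<D>>%MS == D, \rank D == (w + k)%N,
                            (W <= D)%MS & (D <= V)%MS])) /=; last first.
  move=> B /andP [fM sBV]; rewrite genmx_id eqxx /= genmxE.
  move: fM; rewrite /row_free => -> /=.
  by rewrite !genmxE sub_col_mxl col_mx_sub sWV sBV.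
rewrite card_set_sum1 big_distrl /=.
apply: eq_bigr => D /and4P [/eqP gD /eqP rD sWD sDV].
rewrite mul1n -[in LHS]rD -(ext_card k fW sWD) card_set_sum1.
apply: eq_bigl => B.
apply/idP/idP; last first.
  move=> /andP [/andP [fM sBV] /eqP gM].
  rewrite fM /= -gM genmxE; exact: sub_col_mxr.
move=> /andP [fM sBD]; rewrite fM /=.
have sMD : (col_mx W B <= D)%MS by rewrite col_mx_sub sWD sBD.
rewrite (submx_trans sBD sDV) /=.
have sDM : (D <= col_mx W B)%MS.
  have [_ <-] := mxrank_leqif_sup sMD; by rewrite rD.
apply/eqP; rewrite -[X in _ = X]gD; apply/eq_genmx/eqmxP; by rewrite sMD sDM.
Qed.

Lemma q_gt0 : (0 < q)%N. Proof. by have := q_gt1; lia. Qed.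

Lemma fac x i : (q ^ x - q ^ i = q ^ i * (q ^ (x - i) - 1))%N.
Proof.
case: (leqP i x) => h.
  by rewrite mulnBr muln1 -expnD subnKC.
have /eqP -> : (x - i == 0)%N by rewrite subn_eq0 ltnW.
rewrite expn0 subnn muln0; apply/eqP; rewrite subn_eq0 leq_exp2l //; first exact: ltnW.
exact: q_gt1.
Qed.

Lemma prod_fac x b :
  (\prod_(i < b) (q ^ x - q ^ i) = \prod_(i < b) q ^ i * \prod_(i < b) (q ^ (x - i) - 1))%N.
Proof. by rewrite -big_split /=; apply: eq_bigr => i _; rewrite fac. Qed.

Lemma Qpos b : (0 < \prod_(i < b) q ^ i)%N.
Proof. by apply: prodn_gt0 => i; rewrite expn_gt0 q_gt0. Qed.

Lemma Dpos b : (0 < \prod_(i < b) (q ^ i.+1 - 1))%N.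
Proof.
apply: prodn_gt0 => i; rewrite subn_gt0.
by rewrite -{1}(expn0 q) ltn_exp2l // q_gt1.
Qed.

Lemma G_rev b :
  (\prod_(i < b) (q ^ (b - i) - 1) = \prod_(i < b) (q ^ i.+1 - 1))%N.
Proof.
rewrite (reindex_inj rev_ord_inj) /=; apply: eq_bigr => i _.
by rewrite subKn.
Qed.

Lemma Gpos b : (0 < \prod_(i < b) (q ^ b - q ^ i))%N.
Proof. by rewrite prod_fac G_rev muln_gt0 Qpos Dpos. Qed.

Lemma qbinom_mul a b :
  (qbinom q a b * \prod_(i < b) (q ^ b - q ^ i) = \prod_(i < b) (q ^ a - q ^ i))%N.
Proof.
have W0 : row_free (0 : 'M[F]_(0, a)) by rewrite /row_free mxrank0.
have := sub_card b W0 (sub0mx 0 (1%:M : 'M[F]_a)).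
rewrite mxrank1 add0n.
under [in X in _ = X -> _]eq_bigr => i _ do rewrite add0n.
under [in X in (_ * X)%N = _ -> _]eq_bigr => i _ do rewrite add0n.
set N := #|_|.
move=> hN.
have hN' : (N * \prod_(i < b) (q ^ i.+1 - 1) = \prod_(i < b) (q ^ (a - i) - 1))%N.
  move: hN; rewrite !prod_fac G_rev mulnCA => /eqP.
  by rewrite eqn_pmul2l ?Qpos // => /eqP.
rewrite /qbinom -hN' mulnK ?Dpos //.
Qed.

Lemma shift x k :
  (\prod_(i < k) (q ^ x.+1 - q ^ i.+1) = q ^ k * \prod_(i < k) (q ^ x - q ^ i))%N.
Proof.
under eq_bigr => i _ do rewrite !expnS -mulnBr.
by rewrite big_split /= prod_nat_const card_ord.
Qed.

Lemma Grec k :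
  (\prod_(i < k.+1) (q ^ k.+1 - q ^ i) =
   (q ^ k.+1 - 1) * (q ^ k * \prod_(i < k) (q ^ k - q ^ i)))%N.
Proof. by rewrite big_ord_recl /= expn0 shift. Qed.

Lemma arith1 a b : (0 < a)%N -> (a <= b)%N -> (b - 1 = a - 1 + (b - a))%N.
Proof. lia. Qed.

Lemma arith2 a c b : (a + c = b)%N -> a = (b - c)%N.
Proof. lia. Qed.

Lemma pascal m k : (k < m)%N ->
  qbinom q m.+1 k.+1 = (qbinom q m k + q ^ k.+1 * qbinom q m k.+1)%N.
Proof.
move=> km; apply/eqP; rewrite -(eqn_pmul2r (Gpos k.+1)) mulnDl.
rewrite qbinom_mul -mulnA qbinom_mul.
have -> : (qbinom q m k * \prod_(i < k.+1) (q ^ k.+1 - q ^ i) =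
   (q ^ k.+1 - 1) * (q ^ k * \prod_(i < k) (q ^ m - q ^ i)))%N.
  by rewrite Grec mulnCA; congr (_ * _)%N; rewrite mulnCA qbinom_mul.
rewrite -!shift big_ord_recl /= expn0 big_ord_recr /=.
set A := (\prod_(i < k) _)%N.
have h1 : (1 <= q ^ k.+1)%N by rewrite expn_gt0 q_gt0.
have h2 : (q ^ k.+1 <= q ^ m.+1)%N by rewrite leq_exp2l ?q_gt1 // ltnS ltnW.
rewrite [(A * _)%N]mulnC -mulnDl; apply/eqP; congr (_ * _)%N; apply: arith1 h1 h2.
Qed.

Section RM.
Variable m : nat.
Local Notation n0 := #|{: 'rV[F]_m}|.
Local Notation C := (RMgen F m).

Lemma C_entry p (B : 'M[F]_(p, 1 + m)) i j :
  (B *m C) i j = lsubmx B i 0 + \sum_l rsubmx B i l * (enum_val j) 0 l.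
Proof.
rewrite -{1}(hsubmxK B) /RMgen mul_row_col mxE; congr (_ + _).
  by rewrite mxE big_ord1 !mxE mulr1.
by rewrite mxE; apply: eq_bigr => l _; rewrite !mxE.
Qed.

Lemma C_free : row_free C.
Proof.
have key : forall u : 'rV[F]_(1 + m), u *m C = 0 -> u = 0.
  move=> u hu.
  have e : forall x : 'rV[F]_m,
      lsubmx u 0 0 + \sum_l rsubmx u 0 l * x 0 l = 0.
    move=> x; have := congr1 (fun M : 'M[F]_(1, n0) => M 0 (enum_rank x : 'I_n0)) hu.
    have ex : enum_val (enum_rank x : 'I_n0) = x := enum_rankK x.
    by rewrite /= C_entry ex => ->; rewrite mxE.
  have a0 : lsubmx u 0 0 = 0.
    by have := e 0; rewrite big1 ?addr0 // => l _; rewrite !mxE mulr0.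
  rewrite -(hsubmxK u); apply/matrixP => i j; rewrite !mxE.
  case: splitP => k _.
    by rewrite !ord1.
  have := e (delta_mx 0 k); rewrite a0 add0r (bigD1 k) //= big1 ?addr0.
    by rewrite !mxE !eqxx /= mulr1 (ord1 i).
  by move=> l hl; rewrite !mxE (negbTE hl) andbF mulr0.
rewrite -kermx_eq0; apply/eqP/row_matrixP => i.
by rewrite row0; apply: key; rewrite -row_mul mulmx_ker row0.
Qed.


Definition one : 'rV[F]_n0 := const_mx 1.

Lemma one_sub : (one <= C)%MS.
Proof. by rewrite /RMgen sub_col_mxl. Qed.

Lemma supp_zero (D : 'M[F]_n0) j :
  (j \notin supp_code D) = [forall i, D i j == 0].
Proof.
rewrite inE negb_exists; apply/forallP/forallP.
  move=> h i; have := h (row i D); rewrite row_sub /= negbK mxE; exact.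
move=> h v; apply/nandP; case hv: (v <= D)%MS; [right | by left].
rewrite negbK; case/submxP: hv => w ->; rewrite mxE big1 // => i _.
by have /eqP -> := h i; rewrite mulr0.
Qed.

Lemma wt_one (D : 'M[F]_n0) : (one <= D)%MS -> wt_code D = n0.
Proof.
move=> h; rewrite /wt_code.
transitivity #|[set: 'I_n0]|; last by rewrite cardsT card_ord.
apply: eq_card => j; rewrite !inE; apply/existsP; exists one.
by rewrite h /= mxE oner_neq0.
Qed.

Lemma sol_card k p (A : 'M[F]_(k, p)) (c : 'rV[F]_p) : (c <= A)%MS ->
  #|[set x : 'rV[F]_k | x *m A == c]| = (q ^ (k - \rank A))%N.
Proof.
case/submxP => x0 ->.
have -> : [set x : 'rV[F]_k | x *m A == x0 *m A] =
          [set y + x0 | y in [set y : 'rV[F]_k | (y <= kermx A)%MS]].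
  apply/setP => x; rewrite inE; apply/eqP/imsetP.
    move=> hx; exists (x - x0); last by rewrite subrK.
    by rewrite inE sub_kermx mulmxBl hx subrr.
  move=> [y]; rewrite inE sub_kermx => /eqP hy ->.
  by rewrite mulmxDl hy add0r.
by rewrite card_imset ?card_sub ?mxrank_ker //; apply: addIr.
Qed.

Lemma wt_not_one (D : 'M[F]_n0) : (D <= C)%MS -> ~~ (one <= D)%MS ->
  wt_code D = (n0 - q ^ (m - \rank D))%N.
Proof.
move=> sDC hone.
pose B := D *m pinvmx C.
have hD : B *m C = D := mulmxKpV sDC.
have rB : \rank B = \rank D by rewrite -[in RHS]hD [in RHS]mxrankMfree ?C_free.
pose b := lsubmx B; pose Bm := rsubmx B.
have e1C : (row_mx (1 : 'M[F]_1) (0 : 'M[F]_(1, m))) *m C = one.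
  by rewrite /RMgen mul_row_col mul1mx mul0mx addr0.
have ne1 : ~~ (row_mx (1 : 'M[F]_1) (0 : 'M[F]_(1, m)) <= B)%MS.
  by apply: contra hone => h; rewrite -e1C -hD submxMr.
have rBm : \rank Bm = \rank D.
  apply/eqP; rewrite eqn_leq; apply/andP; split.
    have -> : Bm = B *m col_mx 0 1%:M.
      by rewrite -[in RHS](hsubmxK B) mul_row_col mulmx0 add0r mulmx1.
    by rewrite -rB mxrankM_maxl.
  have h1 := rank_col_mx_row (row_mx (1 : 'M[F]_1) (0 : 'M[F]_(1, m))) B.
  rewrite (negbTE ne1) rB in h1.
  have sub : (col_mx (row_mx (1 : 'M[F]_1) (0 : 'M[F]_(1, m))) B <=
              (row_mx (1 : 'M[F]_1) (0 : 'M[F]_(1, m))) + row_mx (0 : 'M[F]_(n0, 1)) Bm)%MS.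
    rewrite col_mx_sub addsmxSl /=.
    have -> : B = b *m row_mx (1 : 'M[F]_1) (0 : 'M[F]_(1, m)) + row_mx 0 Bm.
      by rewrite mul_mx_row mulmx1 mulmx0 add_row_mx addr0 add0r hsubmxK.
    by apply: addmx_sub_adds; [apply: submxMl | apply: submx_refl].
  have h2 := mxrankS sub; rewrite h1 in h2.
  have [h3 _] := mxrank_adds_leqif (row_mx (1 : 'M[F]_1) (0 : 'M[F]_(1, m)))
                                    (row_mx (0 : 'M[F]_(n0, 1)) Bm).
  rewrite rank_row_0mx in h3.
  have h4 := rank_leq_row (row_mx (1 : 'M[F]_1) (0 : 'M[F]_(1, m))).
  lia.
have sbt : (b^T <= Bm^T)%MS.
  have : (col_mx b^T Bm^T <= Bm^T)%MS.
    have [_ <-] := mxrank_leqif_sup (sub_col_mxr b^T Bm^T).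
    by rewrite -tr_row_mx hsubmxK !mxrank_tr rBm rB.
  by rewrite col_mx_sub => /andP [].
have zs : ~: supp_code D = [set j | enum_val j *m Bm^T == - b^T].
  apply/setP => j; rewrite in_setC supp_zero inE.
  have ent : forall i, D i j = (enum_val j *m Bm^T) 0 i + b i 0.
    move=> i; rewrite -[in LHS]hD C_entry addrC mxE; congr (_ + _).
    rewrite [RHS]mxE; apply: eq_bigr => l _; rewrite mulrC; congr (_ * _); by rewrite [RHS]mxE.
  apply/forallP/eqP => [h | h i].
    apply/matrixP => i0 i; rewrite (ord1 i0).
    by have := h i; rewrite ent addr_eq0 => /eqP ->; rewrite !mxE.
  by rewrite ent h !mxE addNr.
have cz : #|~: supp_code D| = (q ^ (m - \rank D))%N.
  rewrite zs -(card_imset _ (@enum_val_inj _ _)).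
  have -> : enum_val @: [set j : 'I_n0 | enum_val j *m Bm^T == - b^T] =
            [set x : 'rV[F]_m | x *m Bm^T == - b^T].
    apply/setP => x; rewrite inE; apply/imsetP/idP.
      by move=> [j]; rewrite inE => hj ->.
    move=> hx; have ex : enum_val (enum_rank x : 'I_n0) = x := enum_rankK x.
    by exists (enum_rank x : 'I_n0); rewrite ?inE ex.
  rewrite sol_card ?mxrank_tr ?rBm //.
  by rewrite -scaleN1r scalemx_sub.
have hc := cardsC (supp_code D); rewrite card_ord in hc.
by rewrite /wt_code; apply: arith2; rewrite -cz.
Qed.

Lemma rankC : \rank C = m.+1.
Proof. by apply/eqP; exact: C_free. Qed.

Lemma n0E : n0 = (q ^ m)%N.
Proof. by rewrite card_mx mul1n. Qed.

Lemma one_free : row_free one.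
Proof.
rewrite /row_free rank_rV; case: (one =P 0) => // h0.
have := congr1 (fun M : 'rV[F]_n0 => M 0 (enum_rank (0 : 'rV[F]_m) : 'I_n0)) h0.
by rewrite /= !mxE => /eqP; rewrite oner_eq0.
Qed.

Lemma count_all k : (k < m)%N ->
  #|[set D : 'M[F]_n0 | [&& <<D>>%MS == D, \rank D == k.+1,
                          ((0 : 'M[F]_(0, n0)) <= D)%MS & (D <= C)%MS]]|
  = qbinom q m.+1 k.+1.
Proof.
move=> km.
have W0 : row_free (0 : 'M[F]_(0, n0)) by rewrite /row_free mxrank0.
have := sub_card k.+1 W0 (sub0mx 0 C).
rewrite rankC -(qbinom_mul m.+1 k.+1) => /eqP.
by rewrite eqn_pmul2r ?Gpos // => /eqP.
Qed.

Lemma count_one k : (k < m)%N ->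
  #|[set D : 'M[F]_n0 | [&& <<D>>%MS == D, \rank D == (1 + k)%N,
                          (one <= D)%MS & (D <= C)%MS]]|
  = qbinom q m k.
Proof.
move=> km.
have := sub_card k one_free one_sub.
rewrite rankC !shift -(qbinom_mul m k) mulnCA mulnA => /eqP.
by rewrite -mulnA eqn_pmul2l ?expn_gt0 ?q_gt0 // eqn_pmul2r ?Gpos // => /eqP.
Qed.

Lemma arith3 c N : (0 < c)%N -> (c <= N)%N -> (N - c != N)%N.
Proof. move=> h1 h2; apply/eqP; lia. Qed.

Lemma count_mid k w : (k < m)%N ->
  gen_wt_count C k.+1 w =
  (if w == n0 then qbinom q m k
   else if w == (n0 - q ^ (m - k.+1))%N then q ^ k.+1 * qbinom q m k.+1
   else 0)%N.
Proof.
move=> km; rewrite /gen_wt_count.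
set c := (q ^ (m - k.+1))%N.
have cls : forall D : 'M[F]_n0, (D <= C)%MS -> \rank D = k.+1 ->
    wt_code D = if (one <= D)%MS then n0 else (n0 - c)%N.
  move=> D sD rD; case: ifP => h; first exact: wt_one.
  by rewrite wt_not_one ?h // rD.
have hne : (n0 - c != n0)%N.
  apply: arith3; first by rewrite expn_gt0 q_gt0.
  by rewrite n0E leq_exp2l ?q_gt1 // leq_subr.
have C1 := count_one km; rewrite add1n in C1.
case: eqP => [-> | hw].
  rewrite -C1; apply: eq_card => D; rewrite !inE.
  apply/and4P/and4P => [[g /eqP r s w'] | [g /eqP r o s]]; split => //.
  - by rewrite r.
  - by move: w'; rewrite (cls D s r); case: ifP => // _ /eqP E; move: hne; rewrite E eqxx.
  - by rewrite r.
  - by rewrite (cls D s r) o.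
case: eqP => [-> | hw'].
  have CA := count_all km.
  have -> : [set D : 'M[F]_n0 | [&& <<D>>%MS == D, \rank D == k.+1, (D <= C)%MS
                                  & wt_code D == (n0 - c)%N]] =
     [set D : 'M[F]_n0 | [&& <<D>>%MS == D, \rank D == k.+1,
                          ((0 : 'M[F]_(0, n0)) <= D)%MS & (D <= C)%MS]] :\:
     [set D : 'M[F]_n0 | [&& <<D>>%MS == D, \rank D == k.+1,
                          (one <= D)%MS & (D <= C)%MS]].
    apply/setP => D; rewrite !inE sub0mx /=.
    case g : (<<D>>%MS == D) => //=; case rD : (\rank D == k.+1) => //=;
      case s : (D <= C)%MS; rewrite ?andbF //=.
    rewrite (cls D s (eqP rD)); case: ifP => o /=; last by rewrite eqxx.
    by apply/negbTE; rewrite eq_sym.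
  rewrite cardsD.
  have -> : forall (A B : {set 'M[F]_n0}), B \subset A -> A :&: B = B.
    by move=> A B; move/setIidPr.
  + by rewrite CA C1 (pascal km) addKn.
  apply/subsetP => D; rewrite !inE sub0mx /= => /and4P [-> -> _ ->].
  done.
apply/eqP; rewrite cards_eq0; apply/eqP/setP => D; rewrite !inE.
apply/negbTE; apply/and4P => [[_ /eqP r s /eqP w']].
move: w'; rewrite (cls D s r); case: ifP => _ E.
  by apply: hw.
by apply: hw'.
Qed.

Lemma wt0 : wt_code (0 : 'M[F]_n0) = 0%N.
Proof.
rewrite /wt_code; apply/eqP; rewrite cards_eq0; apply/eqP/setP => j; rewrite !inE.
apply/existsP => [[v /andP [hv]]]; move: hv; rewrite submx0 => /eqP ->.
by rewrite mxE eqxx.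
Qed.

Lemma count_zero w : gen_wt_count C 0 w = (w == 0%N : nat).
Proof.
rewrite /gen_wt_count; case: eqP => [-> | hw].
  have -> : [set D : 'M[F]_n0 | [&& <<D>>%MS == D, \rank D == 0%N, (D <= C)%MS
                                  & wt_code D == 0%N]] = [set 0].
    apply/setP => D; rewrite !inE; apply/idP/eqP.
      by move/and4P => [_ r _ _]; move: r; rewrite mxrank_eq0 => /eqP.
    by move=> ->; rewrite genmx0 mxrank0 sub0mx wt0 !eqxx.
  by rewrite cards1.
apply/eqP; rewrite cards_eq0; apply/eqP/setP => D; rewrite !inE.
apply/negbTE; apply/and4P => [[_ r _ /eqP w']].
by move: r w'; rewrite mxrank_eq0 => /eqP ->; rewrite wt0 => E; apply: hw.
Qed.

Lemma count_full w : gen_wt_count C m.+1 w = (w == n0 : nat).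
Proof.
have key : forall D : 'M[F]_n0, (D <= C)%MS -> \rank D = m.+1 -> (C <= D)%MS.
  move=> D s r; have [_ <-] := mxrank_leqif_sup s; by rewrite r rankC.
rewrite /gen_wt_count; case: eqP => [-> | hw].
  have -> : [set D : 'M[F]_n0 | [&& <<D>>%MS == D, \rank D == m.+1, (D <= C)%MS
                                  & wt_code D == n0]] = [set <<C>>%MS].
    apply/setP => D; rewrite !inE; apply/idP/eqP.
      move/and4P => [/eqP g /eqP r s _]; rewrite -g; apply/genmxP.
      by rewrite /eqmx s key.
    move=> ->; rewrite genmx_id !genmxE rankC submx_refl wt_one ?genmxE ?one_sub //.
    by rewrite !eqxx.
  by rewrite cards1.
apply/eqP; rewrite cards_eq0; apply/eqP/setP => D; rewrite !inE.
apply/negbTE; apply/and4P => [[_ /eqP r s /eqP w']].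
apply: hw; rewrite -w' wt_one //; exact: submx_trans one_sub (key D s r).
Qed.
End RM.
End Count.

Lemma sum_one N a c (f : 'I_N.+1 -> nat) : (a <= N)%N ->
  (forall w : 'I_N.+1, f w = if (w == a :> nat) then c else 0%N) ->
  \sum_(w < N.+1) (((f w)%:R * 'X^(N - w))%:P * 'X^w : {poly {poly int}}) =
  (c%:R * 'X^(N - a))%:P * 'X^a.
Proof.
move=> ha hf; have ha' : (a < N.+1)%N by [].
rewrite (bigD1 (Ordinal ha')) //= big1 ?addr0; first by rewrite hf eqxx.
move=> i hi; rewrite hf; case: eqP => h.
  by exfalso; move/negP: hi; apply; apply/eqP/val_inj.
by rewrite mul0r polyC0 mul0r.
Qed.

Lemma sum_two N a b ca cb (f : 'I_N.+1 -> nat) : (a <= N)%N -> (b <= N)%N -> a != b ->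
  (forall w : 'I_N.+1, f w = if (w == a :> nat) then ca
                             else if (w == b :> nat) then cb else 0%N) ->
  \sum_(w < N.+1) (((f w)%:R * 'X^(N - w))%:P * 'X^w : {poly {poly int}}) =
  (ca%:R * 'X^(N - a))%:P * 'X^a + (cb%:R * 'X^(N - b))%:P * 'X^b.
Proof.
move=> ha hb hab hf; have ha' : (a < N.+1)%N by []; have hb' : (b < N.+1)%N by [].
rewrite (bigD1 (Ordinal ha')) //= (bigD1 (Ordinal hb')) /=; last first.
  by apply/negP => /eqP [] /eqP; rewrite eq_sym (negbTE hab).
rewrite big1 ?addr0.
  by rewrite !hf eqxx eq_sym (negbTE hab) eqxx.
move=> i /andP [hi1 hi2]; rewrite hf; case: eqP => h.
  by exfalso; move/negP: hi1; apply; apply/eqP/val_inj.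
case: eqP => h'.
  by exfalso; move/negP: hi2; apply; apply/eqP/val_inj.
by rewrite mul0r polyC0 mul0r.
Qed.

Theorem mainTheorem4 (F : finFieldType) (s : nat) : (1 <= s)%N ->
  let q := #|F| in
  let n := (q ^ (s - 1))%N in
  (forall r : nat, (0 < r < s)%N ->
     gen_wt_enum (RMgen F (s - 1)) r =
       ((qbinom q (s - 1) (r - 1))%:R)%:P * 'X^n
       + ((q ^ r * qbinom q (s - 1) r)%N%:R * 'X^(q ^ (s - 1 - r)))%:P
         * 'X^(q ^ (s - 1) - q ^ (s - 1 - r)))
  /\ gen_wt_enum (RMgen F (s - 1)) 0 = ('X^n)%:P
  /\ gen_wt_enum (RMgen F (s - 1)) s = 'X^n.
Proof.
case: s => [//|m] _; rewrite subSS subn0 => q n; rewrite {}/n {}/q.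
split; [|split].
- move=> r /andP [r0]; case: r r0 => [//|k] _; rewrite ltnS => km.
  rewrite /gen_wt_enum.
  set c := (#|F| ^ (m - k.+1))%N.
  have hc : (c <= #|{: 'rV[F]_m}|)%N.
    by rewrite n0E leq_exp2l ?q_gt1 // leq_subr.
  have hne : (#|{: 'rV[F]_m}| - c != #|{: 'rV[F]_m}|)%N.
    by apply: arith3; rewrite ?expn_gt0 ?q_gt0.
  rewrite (@sum_two _ #|{: 'rV[F]_m}| (#|{: 'rV[F]_m}| - c)%N (qbinom #|F| m k)
       (#|F| ^ k.+1 * qbinom #|F| m k.+1)%N
       (fun w => gen_wt_count (RMgen F m) k.+1 w)) //; last first.
  + by move=> w; rewrite count_mid.
  + by rewrite eq_sym.
  + exact: leq_subr.
  by rewrite subnn expr0 mulr1 subKn // subSS subn0 n0E.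
- rewrite /gen_wt_enum (@sum_one _ 0 1 (fun w => gen_wt_count (RMgen F m) 0 w)) //.
    by rewrite subn0 expr0 mulr1 mul1r n0E.
  by move=> w; rewrite count_zero.
- rewrite /gen_wt_enum (@sum_one _ #|{: 'rV[F]_m}| 1
     (fun w => gen_wt_count (RMgen F m) m.+1 w)) //.
    by rewrite subnn expr0 mulr1 polyC1 mul1r n0E.
  by move=> w; rewrite count_full.
Qed.
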